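(* Let $(K,Q)$ be an admissible pair for the control system $\dot x(t)=F(x(t),\omega(t))$, $\omega\in\mathcal{U}$, on $M$. Then for every $\tau>0$ and every $f\in C(U,\mathbb{R})$, \[ P_{inv}(f,K,Q)=\limsup_{n\rightarrow\infty}\frac{1}{n\tau}\log a_{n\tau}(f,K,Q). \]
   Context: $M$ is a smooth (connected, second countable, Hausdorff, $C^\infty$) manifold. A control system on $M$ is $\dot x(t)=F(x(t),\omega(t))$, where $U\subset\mathbb{R}^m$ is compact (the control range), $\mathcal{U}$ is the set of measurable $\omega:\mathbb{R}\to\mathbb{R}^m$ with $\omega(t)\in U$ a.e., $F:M\times\mathbb{R}^m\to TM$ is $C^1$ with $F(\cdot,u)$ a smooth vector field for each $u\in U$, and for each $x\in M,\omega\in\mathcal{U}$ there is a unique solution $\varphi(t,x,\omega)$ defined for all $t\in\mathbb{R}$. A pair $(K,Q)$ of nonempty subsets of $M$ is admissible if $K$ is compact and for each $x\in K$ there is $\omega\in\mathcal{U}$ with $\varphi(t,x,\omega)\in Q$ for all $t\ge 0$. For $\tau>0$, a set $\mathcal{S}\subset\mathcal{U}$ is $(\tau,K,Q)$-spanning if for every $x\in K$ there is $\omega\in\mathcal{S}$ with $\varphi(t,x,\omega)\in Q$ for all $t\in[0,\tau]$. For $f\in C(U,\mathbb{R})$ (a potential) let $(S_\tau f)(\omega)=\int_0^\tau f(\omega(t))\,dt$, $a_\tau(f,K,Q)=\inf\{\sum_{\omega\in\mathcal{S}}e^{(S_\tau f)(\omega)}:\mathcal{S}\text{ is }(\tau,K,Q)\text{-spanning}\}$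 (possibly $+\infty$), and the invariance pressure $P_{inv}(f,K,Q)=\limsup_{\tau\to\infty}\frac{1}{\tau}\log a_\tau(f,K,Q)$. *)

(* Defs.v *)
From HB Require Import structures.
From mathcomp Require Import all_boot all_order all_algebra.
From mathcomp Require Import all_classical all_reals all_analysis.
Set Implicit Arguments. Unset Strict Implicit. Unset Printing Implicit Defensive.
Import Order.TTheory GRing.Theory Num.Theory.
Import numFieldNormedType.Exports.
Local Open Scope classical_set_scope.
Local Open Scope ring_scope.

Definition controls (R : realType) (m : nat) (U : set 'rV[R]_m)
  : set (R -> 'rV[R]_m) :=
  [set w : R -> 'rV[R]_m | (forall i : 'I_m, measurable_fun setT (fun t : R => w t ord0 i)) /\
           {ae (@lebesgue_measure R), forall t, U (w t)}].

Definition S_int (R : realType) (m : nat) (f : 'rV[R]_m -> R) (tau : R)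
  (w : R -> 'rV[R]_m) : R :=
  (\int[@lebesgue_measure R]_(t in `[0, tau]) f (w t))%R.

Definition spanning (R : realType) (m : nat) (M : Type) (U : set 'rV[R]_m)
  (phi : R -> M -> (R -> 'rV[R]_m) -> M) (tau : R) (K Q : set M)
  (S : set (R -> 'rV[R]_m)) : Prop :=
  S `<=` controls U /\
  forall x, K x -> exists2 w, S w & forall t, 0 <= t <= tau -> Q (phi t x w).

(* a_tau(f,K,Q) in [0,+oo] (inf of the empty set is +oo) *)
Definition a_tau (R : realType) (m : nat) (M : Type) (U : set 'rV[R]_m)
  (phi : R -> M -> (R -> 'rV[R]_m) -> M) (f : 'rV[R]_m -> R) (tau : R)
  (K Q : set M) : \bar R :=
  ereal_inf [set (\esum_(w in S) (expR (S_int f tau w))%:E)%E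
            | S in spanning U phi tau K Q].

Definition elog (R : realType) (x : \bar R) : \bar R :=
  match x with
  | r%:E => if (0 < r)%R then (ln r)%:E else -oo
  | +oo => +oo
  | -oo => -oo
  end%E.

Definition P_inv (R : realType) (m : nat) (M : Type) (U : set 'rV[R]_m)
  (phi : R -> M -> (R -> 'rV[R]_m) -> M) (f : 'rV[R]_m -> R) (K Q : set M)
  : \bar R :=
  limf_esup (fun tau : R => ((tau^-1)%:E * elog (a_tau U phi f tau K Q))%E)
            (pinfty_nbhs R).

Definition admissible (R : realType) (m : nat) (M : topologicalType)
  (U : set 'rV[R]_m) (phi : R -> M -> (R -> 'rV[R]_m) -> M) (K Q : set M)
  : Prop :=
  K !=set0 /\ Q !=set0 /\ compact K /\
  forall x, K x -> exists2 w, controls U w & forall t, 0 <= t -> Q (phi t x w).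

(* Main.v *)
Require Import Defs.
From HB Require Import structures.
From mathcomp Require Import all_boot all_order all_algebra.
From mathcomp Require Import all_classical all_reals all_analysis.
From mathcomp Require Import lra.
Import Order.TTheory GRing.Theory Num.Theory.
Import numFieldNormedType.Exports.
Local Open Scope classical_set_scope.
Local Open Scope ring_scope.

Local Open Scope ereal_scope.

Lemma esumZ (R : realType) (T : choiceType) (S : set T) (a : T -> \bar R) (k : R) :
  (0 < k)%R -> (forall i, 0 <= a i) ->
  \esum_(i in S) (k%:E * a i) = k%:E * \esum_(i in S) a i.
Proof.
move=> k0 a0; rewrite /esum -(ereal_sup_pZl _ k0); congr ereal_sup.
apply/seteqP; split => y.
- move=> [A HA <-]; exists (\sum_(x \in A) a x); first by exists A.
  by rewrite ge0_mule_fsumr.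
- move=> [z [A HA <-] <-]; exists A => //; by rewrite ge0_mule_fsumr.
Qed.

Lemma esumZ_le (R : realType) (T : choiceType) (S : set T) (a : T -> \bar R) (k : R) :
  (0 < k)%R -> (forall i, 0 <= a i) ->
  \esum_(i in S) (k%:E * a i) <= k%:E * \esum_(i in S) a i.
Proof. by move=> k0 a0; rewrite esumZ. Qed.

Section nonmeas.
Import HBNNSimple.
Context d (T : measurableType d) (R : realType) (mu : {measure set T -> \bar R}).

Lemma int_le_nm (D : set T) (f1 f2 : T -> \bar R) :
  (forall x, D x -> 0 <= f1 x) -> (forall x, D x -> f1 x <= f2 x) ->
  \int[mu]_(x in D) f1 x <= \int[mu]_(x in D) f2 x.
Proof.
move=> f10 f12.
have f20 : forall x, D x -> 0 <= f2 x by move=> x Dx; exact: le_trans (f10 x Dx) (f12 x Dx).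
rewrite (ge0_integralE _ f10) (ge0_integralE _ f20) /=.
apply: ereal_sup_le => _ [h Hh <-]; exists h => //= x.
apply: le_trans (Hh x) _; rewrite /patch; case: ifPn => // /[1!inE] Dx.
exact: f12.
Qed.

Lemma int_dom_nm (D1 D2 : set T) (f : T -> \bar R) :
  (forall x, 0 <= f x) -> D1 `<=` D2 ->
  \int[mu]_(x in D1) f x <= \int[mu]_(x in D2) f x.
Proof.
move=> f0 D12; rewrite (integral_mkcond D1) (integral_mkcond D2).
apply: int_le_nm => x _; rewrite /patch.
- by case: ifPn.
- case: ifPn => [/[1!inE] /D12 D2x|_]; first by rewrite mem_set.
  by case: ifPn.
Qed.

Lemma int_split_nm (A : set T) (f : T -> \bar R) : measurable A ->
  (forall x, 0 <= f x) ->
  \int[mu]_x f x <= \int[mu]_(x in A) f x + \int[mu]_(x in ~` A) f x.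
Proof.
move=> mA f0.
rewrite (ge0_integralE _ (fun x _ => f0 x)) /=.
apply: ge_ereal_sup => _ [h Hh <-].
rewrite -integralT_nnsfun -(setUv A) ge0_integral_setU//.
- apply: leeD; apply: int_le_nm => x _ /=; rewrite ?lee_fin ?fun_ge0//;
  move: (Hh x); rewrite /patch in_setT => // _; exact: fun_ge0.
- by apply: measurableC.
- by apply/measurable_realfun.measurable_EFinP; exact: measurable_funTS.
- by move=> x _; rewrite lee_fin.
- by rewrite disj_set2E setICr.
Qed.

Lemma int_bound_nm (E : set T) (f : T -> \bar R) (C : R) : measurable E -> (0 <= C)%R ->
  (forall x, 0 <= f x) -> {ae mu, forall x, E x -> f x <= C%:E} ->
  \int[mu]_(x in E) f x <= C%:E * mu E.
Proof.
move=> mE C0 f0 fC.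
rewrite (ge0_integralE _ (fun x _ => f0 x)) /=.
apply: ge_ereal_sup => _ [h Hh <-].
have hE : forall x, ~ E x -> h x = 0%R.
  move=> x Ex; apply/eqP; rewrite eq_le fun_ge0 andbT -lee_fin.
  by move: (Hh x); rewrite /patch memNset.
rewrite -integralT_nnsfun.
have -> : \int[mu]_x (h x)%:E = \int[mu]_(x in E) (h x)%:E.
  rewrite [RHS]integral_mkcond; congr (integral _ _ _); apply/funext => x.
  rewrite /patch; case: ifPn => // /negP Ex; rewrite hE// => Ex'; apply: Ex; exact: mem_set.
rewrite -integral_cst//.
apply: ae_ge0_le_integral => //.
- by move=> x _; rewrite lee_fin.
- by apply/measurable_realfun.measurable_EFinP; exact: measurable_funTS.
- case: fC => N [mN N0 sub]; exists N; split => // x /= nx; apply: sub => /= HC.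
  apply: nx => /= Ex; apply: le_trans (HC Ex).
  by move: (Hh x); rewrite /patch mem_set.
Qed.
End nonmeas.
Local Close Scope ereal_scope.

Section X.
Variable R : realType.
Local Notation mu := (@lebesgue_measure R).
Lemma meas_cc (a b : R) : a <= b -> mu `[a, b] = (b - a)%:E.
Proof.
move=> ab; rewrite lebesgue_measure_itv /= lte_fin.
case: ltP => h; first by rewrite EFinB.
have -> : a = b by apply/eqP; rewrite eq_le ab h.
by rewrite subrr.
Qed.
Lemma meas_oc (a b : R) : a <= b -> mu `]a, b] = (b - a)%:E.
Proof.
move=> ab; rewrite lebesgue_measure_itv /= lte_fin.
case: ltP => h; first by rewrite EFinB.
have -> : a = b by apply/eqP; rewrite eq_le ab h.
by rewrite subrr.
Qed.

Lemma fin_of_bnd (x : \bar R) (c : R) : (0 <= x)%E -> (x <= c%:E)%E -> x = (fine x)%:E.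
Proof.
move=> x0 xc; rewrite fineK// ge0_fin_numE//; exact: le_lt_trans xc (ltry _).
Qed.

Lemma Sint_shift (g : R -> R) (C t T : R) : 0 <= C -> 0 <= t -> t <= T ->
  {ae mu, forall x, `|g x| <= C} ->
  \int[mu]_(x in `[0,t]) g x <= \int[mu]_(x in `[0,T]) g x + C * (T - t).
Proof.
move=> C0 t0 tT gC.
pose G := (fun x => (g x)%:E).
have aeP (E : set R) : {ae mu, forall x, E x -> (G^\+ x <= C%:E)%E}.
  case: gC => N [mN N0 sub]; exists N; split => // x /= nx; apply: sub => /= H.
  apply: nx => _ /=; rewrite funeposE /G ge_max !lee_fin C0 andbT.
  exact: le_trans (ler_norm _) H.
have aeN (E : set R) : {ae mu, forall x, E x -> (G^\- x <= C%:E)%E}.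
  case: gC => N [mN N0 sub]; exists N; split => // x /= nx; apply: sub => /= H.
  apply: nx => _ /=; rewrite funenegE /G ge_max !lee_fin C0 andbT.
  by have := ler_norm (- g x); rewrite normrN => /le_trans; apply.
have tT' : `[0%R, t] `<=` `[0%R, T] by apply: subset_itvl; rewrite bnd_simp.
have hP : (\int[mu]_(x in `[0%R,t]) G^\+ x <= \int[mu]_(x in `[0%R,T]) G^\+ x)%E.
  by apply: int_dom_nm => // x; exact: funepos_ge0.
have hN : (\int[mu]_(x in `[0%R,T]) G^\- x <= \int[mu]_(x in `[0%R,t]) G^\- x
            + (C * (T - t))%:E)%E.
  rewrite integral_mkcond.
  have F0 : forall x, (0 <= (G^\- \_ `[0%R, T]) x)%E.
    by move=> x; rewrite /patch; case: ifPn => // _; exact: funeneg_ge0.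
  apply: le_trans (int_split_nm _ _ _ mu _ _ (measurable_itv `[0%R, t]) F0) _.
  apply: leeD.
    rewrite le_eqVlt; apply/orP; left; apply/eqP; apply: eq_integral => x /[1!inE] xt.
    by rewrite /patch mem_set//; exact: tT'.
  have -> : (\int[mu]_(x in ~` `[0%R, t]) (G^\- \_ `[0%R, T]) x =
             \int[mu]_(x in `]t, T]) G^\- x)%E.
    rewrite integral_mkcond [RHS]integral_mkcond; congr (integral _ _ _).
    apply/funext => x; rewrite /patch in_setC !mem_setE /= !in_itv /=.
    have [x0|x0] := leP (0:R) (x:R); have [xt|xt] := leP (x:R) t;
      have [xT|xT] := leP (x:R) T => //=; exfalso; lra.
  rewrite EFinM -meas_oc//.
  apply: int_bound_nm => //.
have finX (F : R -> \bar R) (s : R) : 0 <= s -> (forall x, 0 <= F x)%E ->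
    {ae mu, forall x, `[0%R, s]%classic x -> (F x <= C%:E)%E} ->
    (\int[mu]_(x in `[0%R, s]) F x = (fine (\int[mu]_(x in `[0%R, s]) F x))%:E)%E.
  move=> s0 F0 FC; apply: (@fin_of_bnd _ (C * s)).
    by apply: integral_ge0 => x _; exact: F0.
  rewrite EFinM (_ : s%:E = mu `[0%R, s]); last by rewrite meas_cc// subr0.
  by apply: int_bound_nm => //; exact: measurable_itv.
have eI (s : R) : (\int[mu]_(x in `[0%R,s]) (g x)%:E =
   \int[mu]_(x in `[0%R,s]) G^\+ x - \int[mu]_(x in `[0%R,s]) G^\- x)%E.
  exact: integralE.
rewrite /Rintegral !eI.
have T0 : 0 <= T by apply: le_trans tT.
have ePt := finX _ t t0 (fun x => funepos_ge0 G x) (aeP _).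
have eNt := finX _ t t0 (fun x => funeneg_ge0 G x) (aeN _).
have ePT := finX _ T T0 (fun x => funepos_ge0 G x) (aeP _).
have eNT := finX _ T T0 (fun x => funeneg_ge0 G x) (aeN _).
move: hP hN; rewrite ePt eNt ePT eNT.
rewrite -!EFinB /= -EFinD !lee_fin => ? ?; lra.
Qed.

Lemma elog_le (x y : \bar R) : (x <= y)%E -> (elog x <= elog y)%E.
Proof.
case: x => [x| |]; case: y => [y| |] //=.
- rewrite lee_fin => xy; case: ifPn => x0; last by rewrite leNye.
  rewrite (lt_le_trans x0 xy) lee_fin ler_ln// posrE//; exact: lt_le_trans xy.
all: try by move=> _; rewrite ?leey ?leNye.
all: try by rewrite leNgt ?ltry ?ltNyr.
all: idtac.
Qed.

Lemma elog_scale (c : R) (x : \bar R) :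
  elog ((expR c)%:E * x)%E = (c%:E + elog x)%E.
Proof.
case: x => [x| |] /=.
- rewrite pmulr_rgt0 ?expR_gt0//; case: ifPn => x0; last by rewrite addeNy.
  by rewrite lnM ?posrE ?expR_gt0// expRK.
- by rewrite mulry gtr0_sg ?expR_gt0// mul1e /= addey.
- by rewrite mulrNy gtr0_sg ?expR_gt0// mul1e /= addeNy.
Qed.

Lemma mul_inv_le (T r : R) (x : \bar R) : 0 < T ->
  (((T^-1)%:E * x) <= r%:E)%E -> (x <= (r * T)%:E)%E.
Proof.
move=> T0; case: x => [x| |] /=.
- rewrite -EFinM !lee_fin ler_pdivrMl// => h; by rewrite mulrC.
- by rewrite mulry gtr0_sg ?invr_gt0// mul1e leNgt ltry.
- by move=> _; rewrite leNye.
Qed.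

Lemma le_from_above (X L : \bar R) :
  (forall r : R, (L < r%:E)%E -> forall e : R, 0 < e -> (X <= (r + e)%:E)%E) ->
  (X <= L)%E.
Proof.
case: L => [l| |] H.
- apply/lee_addgt0Pr => e e0.
  have := H (l + e / 2) _ (e / 2) _; rewrite -EFinD.
  have -> : l + e / 2 + e / 2 = l + e by lra.
  apply; first by rewrite lte_fin; lra.
  lra.
- by rewrite leey.
- case: X H => [x| |] H.
  + have := H (x - 2)%R (ltNyr (x - 2)%R) 1 ltr01. rewrite lee_fin => h; exfalso; lra.
  + by have := H 0%R (ltNyr 0%R) 1 ltr01; rewrite leNgt ltry.
  + by [].
Qed.

End X.

Lemma a_mono (R : realType) (m : nat) (M : Type) (U : set 'rV[R]_m)
  (phi : R -> M -> (R -> 'rV[R]_m) -> M) (f : 'rV[R]_m -> R) (K Q : set M)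
  (C t T : R) :
  0 <= C -> 0 <= t -> t <= T -> (forall u, U u -> `|f u| <= C) ->
  (a_tau U phi f t K Q <= (expR (C * (T - t)))%:E * a_tau U phi f T K Q)%E.
Proof.
move=> C0 t0 tT fC.
rewrite /a_tau -(ereal_inf_pZl _ (expR_gt0 (C * (T - t)))).
apply: le_ereal_inf_tmp => _ [_ [S HS <-] <-].
apply: (@le_trans _ _ (\esum_(w in S) (expR (S_int f t w))%:E)%E).
  apply: ereal_inf_lbound; exists S => //.
  case: HS => Sc Hs; split => // x Kx; have [w Sw Hw] := Hs x Kx.
  by exists w => // s /andP[s0 st]; apply: Hw; rewrite s0 (le_trans st tT).
have ge0 : forall w0, (0 <= (fun w => (expR (S_int f T w))%:E) w0)%E.
  by move=> w0; rewrite lee_fin expR_ge0.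
apply: (le_trans _ (@esumZ_le _ _ S (fun w => (expR (S_int f T w))%:E) (expR (C * (T - t))) (expR_gt0 _) ge0)).
apply: le_esum => w Sw; rewrite -EFinM lee_fin -expRD ler_expR.
have aew : {ae (@lebesgue_measure R), forall x, `|f (w x)| <= C}.
  case: HS => Sc _; have [_ [N [mN N0 sub]]] := Sc w Sw.
  exists N; split => // s /= ns; apply: sub => /= Us; apply: ns; exact: fC.
have := @Sint_shift R (fun s => f (w s)) C t T C0 t0 tT aew.
rewrite /S_int; lra.
Qed.

Theorem proposition2p9 (R : realType) (m : nat) (U : set 'rV[R]_m)
  (M : topologicalType) (phi : R -> M -> (R -> 'rV[R]_m) -> M)
  (K Q : set M) :
  compact U -> U !=set0 -> hausdorff_space M ->
  (* phi is the (global) solution map of a time-invariant control system *)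
  (forall x w, phi 0 x w = x) ->
  (forall t s x w, phi (t + s) x w = phi s (phi t x w) (fun r => w (r + t))) ->
  admissible U phi K Q ->
  forall (tau : R) (f : 'rV[R]_m -> R), 0 < tau -> {within U, continuous f} ->
  P_inv U phi f K Q =
  limn_esup (fun n : nat =>
    (((n%:R * tau)^-1)%:E * elog (a_tau U phi f (n%:R * tau) K Q))%E).
Proof.
move=> cU U0 hM phi0 phiS adm tau f tau0 fc.
have [C [C0 fC]] : exists C : R, 0 <= C /\ forall u, U u -> `|f u| <= C.
  have := compact_bounded (continuous_compact fc cU).
  case=> M0 [M0r HM]; exists (`|M0| + 1); split.
    by have := normr_ge0 M0; lra.
  move=> u Uu; apply: (HM (`|M0| + 1)); last by exists u.
  by have := real_ler_norm M0r; lra.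
rewrite /P_inv /limn_esup !limf_esupE.
apply/eqP; rewrite eq_le; apply/andP; split.
  apply: le_from_above => r Lr e e0.
  have [_ [V [N _ HN] <-] hV] := ereal_inf_lt Lr.
  have hn : forall n, (N <= n)%N ->
      (((n%:R * tau)^-1)%:E * elog (a_tau U phi f (n%:R * tau) K Q) <= r%:E)%E.
    move=> n Nn; apply: le_trans (ltW hV); apply: ereal_sup_ubound.
    by exists n => //; exact: HN.
  have Cre : 0 <= (C + `|r|) * tau / e.
    by apply: divr_ge0; [apply: mulr_ge0; [exact: addr_ge0 C0 (normr_ge0 r)|exact: ltW]|exact: ltW].
  have Nt0 : 0 <= N%:R * tau by apply: mulr_ge0 => //; exact: ltW.
  pose M1 := N%:R * tau + (C + `|r|) * tau / e + 1.
  apply: ge_ereal_inf.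
  exists (ereal_sup [set ((t^-1)%:E * elog (a_tau U phi f t K Q))%E
                      | t in [set t | M1 < t]]).
    by exists [set t | M1 < t] => //; exists M1; split => //; exact: num_real.
  apply: ge_ereal_sup => _ [t /= Mt <-].
  have t0 : 0 < t by rewrite /M1 /= in Mt; lra.
  pose k := Num.truncn (t / tau).
  pose n := k.+1.
  pose T := n%:R * tau.
  have tT : t < T by rewrite -ltr_pdivrMr// /T /n /k; exact: truncnS_gt.
  have hk : k%:R * tau <= t.
    by rewrite -ler_pdivlMr// /k truncn_le divr_ge0// ltW.
  have TE : T = k%:R * tau + tau by rewrite /T /n -addn1 natrD mulrDl mul1r.
  have Nn : (N <= n)%N.
    have : N%:R * tau < n%:R * tau by rewrite -/T /M1 in Mt *; lra.
    by rewrite ltr_pM2r// ltr_nat => /ltnW.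
  have T0 : 0 < T by lra.
  have eT := @mul_inv_le R T r _ T0 (hn n Nn).
  have am := @a_mono R m M U phi f K Q C t T C0 (ltW t0) (ltW tT) fC.
  have el := @elog_le R _ _ am; rewrite elog_scale in el.
  have el2 : (elog (a_tau U phi f t K Q) <= (C * (T - t) + r * T)%:E)%E.
    by apply: le_trans el _; rewrite EFinD; apply: leeD.
  apply: le_trans (lee_wpmul2l _ el2) _; first by rewrite lee_fin invr_ge0 ltW.
  rewrite -EFinM lee_fin mulrC ler_pdivrMr//.
  have h1 : C * (T - t) <= C * tau by rewrite ler_wpM2l//; lra.
  have h2 : r * (T - t) <= `|r| * tau.
    apply: (@le_trans _ _ (`|r| * (T - t))).
      by rewrite ler_wpM2r ?real_ler_norm ?num_real//; lra.
    by rewrite ler_wpM2l//; lra.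
  have h3 : (C + `|r|) * tau < t * e.
    by rewrite -ltr_pdivrMr//; rewrite /M1 in Mt; lra.
  have h4 : r * T = r * (T - t) + r * t by rewrite mulrBr; lra.
  rewrite h4; nra.
  apply: le_ereal_inf_tmp => _ [V [M1 [M1r HM1]] <-].
  pose N := (Num.truncn (M1 / tau)).+1.
  have MN : M1 < N%:R * tau.
    by rewrite -ltr_pdivrMr// /N; exact: truncnS_gt.
  apply: (@le_trans _ _ (ereal_sup [set
     (((n%:R * tau)^-1)%:E * elog (a_tau U phi f (n%:R * tau) K Q))%E
     | n in [set n | (N <= n)%N]])).
    by apply: ereal_inf_lbound; exists [set n | (N <= n)%N] => //; exists N.
  apply: ereal_sup_le => _ [n Nn <-]; exists (n%:R * tau) => //; apply: HM1.
  apply: (lt_le_trans MN); rewrite ler_pM2r// ler_nat; exact: Nn.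
Qed.
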